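(* Let $\mathcal{C}_1$ be an $(n,k,d)$ code constructed from a $t$-design $(I_n,\mathcal{B})\in S_\lambda(n-d+1,r,n)$, achieving $(\bar\alpha,\bar M_1)$, and let $\mathcal{C}_2$ be the $(n,k,d)$ code constructed from the complete block design $S_{\lambda^*}(n-d+1,r,n)$, achieving $(\bar\alpha,\bar M_2)$. Then $\bar M_1\le\bar M_2$, with equality if and only if, in $(I_n,\mathcal{B})$, the quantity $T(A)$ is the same for all sets $A\subset I_n$ with $|A|=n-k$.
   Context: Exact-repair regenerating codes: $n$ disks each storing $\alpha$ symbols, any $k$ disks suffice to reconstruct $M$ information symbols, and a failed disk is repaired from $d$ helper disks; the normalized measures are $\bar\alpha=\alpha/\beta$ and $\bar M=M/\beta$, where $\beta$ is the per-helper repair amount (here the total repair bandwidth is $\gamma=d\beta$). Code construction from a $t$-design $(I_n,\mathcal{B})\in S_\lambda(t,r,n)$ with $t=n-d+1$ (blocks of size $r$, every $t$-subset of $I_n$ contained in exactly $\lambda$ blocks, $N_\lambda(t,r,n)=\lambda\binom{n}{t}\binom{r}{t}^{-1}$ blocks): for $A\subset I_n$ with $|A|=n-k$ let $T(A)=\sum_{B\in\mathcal{B}:|B\cap A|\ge t}(|B\cap A|-t+1)$ and $T=\max_{|A|=n-k}T(A)$. Information symbols (of number $M$) together with $T$ parity symbols of a first-layer linear code fill an $(r-t+1)\times N_\lambda(t,r,n)$ array; each column is extended by $t-1$ parity symbols of a fixed systematic $(r,r-t+1)$ MDS code to form a parity group of $r$ symbols, which are stored one per disk on the disks of the corresponding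 block. The parameters are $\alpha=\lambda\binom{n-1}{t-1}/\binom{r-1}{t-1}$, $\gamma=(r-t+1)\alpha$, $M=(r-t+1)N_\lambda(t,r,n)-T$. The complete block design $S_{\lambda^*}(t,r,n)$ takes all $r$-subsets of $I_n$ as blocks, with $\lambda^*=\binom{n-t}{r-t}$. *)

(* Defs.v *)
From mathcomp Require Import all_boot all_order all_algebra.
Set Implicit Arguments. Unset Strict Implicit. Unset Printing Implicit Defensive.
Import Order.TTheory GRing.Theory Num.Theory.

(* A block design on I_n = 'I_n is a list of blocks (repetitions allowed). *)

Definition is_design (n t r lam : nat) (Bs : seq {set 'I_n}) : Prop :=
  (forall B, B \in Bs -> #|B| = r) /\
  (forall S : {set 'I_n}, #|S| = t -> count (fun B : {set 'I_n} => S \subset B) Bs = lam).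

Definition complete_design (n r : nat) : seq {set 'I_n} :=
  enum [set B : {set 'I_n} | #|B| == r].

Definition TA (n t : nat) (Bs : seq {set 'I_n}) (A : {set 'I_n}) : nat :=
  \sum_(B <- Bs | t <= #|B :&: A|) (#|B :&: A| - t + 1).

Definition Tmax (n k t : nat) (Bs : seq {set 'I_n}) : nat :=
  \max_(A : {set 'I_n} | #|A| == n - k) TA t Bs A.

Local Open Scope ring_scope.

Definition code_alpha (n t r lam : nat) : rat :=
  (lam * 'C(n.-1, t.-1))%:R / ('C(r.-1, t.-1))%:R.

Definition code_N (n t r lam : nat) : rat :=
  (lam * 'C(n, t))%:R / ('C(r, t))%:R.

Definition code_gamma (n t r lam : nat) : rat :=
  (r - t + 1)%:R * code_alpha n t r lam.

Definition code_beta (n d t r lam : nat) : rat :=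
  code_gamma n t r lam / d%:R.

Definition code_M (n k t r lam : nat) (Bs : seq {set 'I_n}) : rat :=
  (r - t + 1)%:R * code_N n t r lam - (Tmax k t Bs)%:R.

Definition code_alphabar (n d t r lam : nat) : rat :=
  code_alpha n t r lam / code_beta n d t r lam.

Definition code_Mbar (n k d t r lam : nat) (Bs : seq {set 'I_n}) : rat :=
  code_M k t r lam Bs / code_beta n d t r lam.

(* Main.v *)
Require Import Defs.
From mathcomp Require Import all_boot all_order all_algebra.
From mathcomp Require Import fingroup perm ring zify.
Import Order.TTheory GRing.Theory Num.Theory.
Set Implicit Arguments. Unset Strict Implicit. Unset Printing Implicit Defensive.

Lemma binid n r t : t <= r -> r <= n ->
  'C(n, r) * 'C(r, t) = 'C(n, t) * 'C(n - t, r - t).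
Proof.
move=> tr rn.
have F1 := bin_fact rn; have F2 := bin_fact tr.
have F3 := bin_fact (leq_trans tr rn).
have F4 : r - t <= n - t by apply: leq_sub2r.
have F5 := bin_fact F4.
have E : n - t - (r - t) = n - r by rewrite subnBA // subnK // (leq_trans tr rn).
rewrite E in F5.
have pos : 0 < t`! * (r - t)`! * (n - r)`! by rewrite !muln_gt0 !fact_gt0.
apply/eqP; rewrite -(eqn_pmul2r pos); apply/eqP.
transitivity ('C(n, r) * ('C(r, t) * (t`! * (r - t)`!)) * (n - r)`!); first by ring.
rewrite F2.
transitivity ('C(n, t) * t`! * ('C(n - t, r - t) * ((r - t)`! * (n - r)`!))); last by ring.
rewrite F5.
have G3 : 'C(n, t) * t`! * (n - t)`! = n`! by rewrite -mulnA.
have G1 : 'C(n, r) * r`! * (n - r)`! = n`! by rewrite -mulnA.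
by rewrite G3 G1.
Qed.
Lemma phi_inv (n : nat) (f : nat -> nat) m (s : 'I_n -> 'I_n) (s_inv : involutive s) (X : {set 'I_n}) :
  \sum_(Y : {set 'I_n} | #|Y| == m) f #|s @: X :&: Y| =
  \sum_(Y : {set 'I_n} | #|Y| == m) f #|X :&: Y|.
Proof.
have sinj : injective s := inv_inj s_inv.
rewrite (reindex_inj (imset_inj sinj)) /=.
apply: eq_big => Y; first by rewrite card_imset.
by move=> _; rewrite -imsetI ?card_imset //; move=> ? ? _ _; apply: sinj.
Qed.

Lemma phi_card (n : nat) (f : nat -> nat) m (X X' : {set 'I_n}) : #|X| = #|X'| ->
  \sum_(Y : {set 'I_n} | #|Y| == m) f #|X :&: Y| =
  \sum_(Y : {set 'I_n} | #|Y| == m) f #|X' :&: Y|.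
Proof.
move eqN : #|X :\: X'| => N; elim: N X eqN => [|N IH] X eqN hc.
  have sub : X \subset X'.
    by rewrite -setD_eq0 -cards_eq0 eqN.
  have /eqP XX : X == X' by rewrite eqEcard sub hc leqnn.
  by rewrite XX.
have /set0Pn [x xD] : X :\: X' != set0 by rewrite -card_gt0 eqN.
have : #|X' :\: X| = N.+1 by rewrite cardsD setIC -hc -cardsD.
move=> eqN'; have /set0Pn [y yD] : X' :\: X != set0 by rewrite -card_gt0 eqN'.
move: xD yD; rewrite !inE => /andP[xX' xX] /andP[yX yX'].
set s := tperm x y.
have sinv : involutive s := tpermK x y.
rewrite -(phi_inv f m sinv X); apply: IH; last by rewrite card_imset ?hc //; apply: inv_inj.
have -> : s @: X :\: X' = (X :\: X') :\ x.
  apply/setP => z; rewrite !inE.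
  have -> : (z \in s @: X) = (s z \in X) by rewrite -{1}(sinv z) mem_imset //; apply: inv_inj.
  rewrite /s; case: tpermP => [->|->|zx zy].
  - by rewrite eqxx (negbTE yX) andbF.
  - by rewrite yX' !andbF.
  - by move/eqP/negbTE: zx => ->.
by move: eqN; rewrite (cardsD1 x (X :\: X')) !inE xX' xX => -[].
Qed.

Definition gg (t m : nat) := if t <= m then m - t + 1 else 0.

Lemma TA_gg n t (Bs : seq {set 'I_n}) A :
  TA t Bs A = \sum_(B <- Bs) gg t #|B :&: A|.
Proof. by rewrite /TA big_mkcond. Qed.

Lemma sum_TA n k t r (Bs : seq {set 'I_n}) (B0 : {set 'I_n}) :
  #|B0| = r -> (forall B, B \in Bs -> #|B| = r) ->
  \sum_(A : {set 'I_n} | #|A| == n - k) TA t Bs A =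
  size Bs * \sum_(A : {set 'I_n} | #|A| == n - k) gg t #|B0 :&: A|.
Proof.
move=> cB0 cBs.
under eq_bigr do rewrite TA_gg.
rewrite exchange_big /=.
rewrite (eq_big_seq (fun _ => \sum_(A : {set 'I_n} | #|A| == n - k) gg t #|B0 :&: A|)).
  by rewrite big_const_seq count_predT iter_addn_0 mulnC.
move=> B BB; apply: phi_card; by rewrite cB0 cBs.
Qed.

Lemma TA_complete n t r (A : {set 'I_n}) :
  TA t (complete_design n r) A =
  \sum_(B : {set 'I_n} | #|B| == r) gg t #|A :&: B|.
Proof.
rewrite TA_gg /complete_design big_enum /=.
by apply: eq_big => B; rewrite ?inE // setIC.
Qed.

Lemma sum_TA_complete n k t r (B0 : {set 'I_n}) : #|B0| = r ->
  \sum_(A : {set 'I_n} | #|A| == n - k) TA t (complete_design n r) A =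
  'C(n, r) * \sum_(A : {set 'I_n} | #|A| == n - k) gg t #|B0 :&: A|.
Proof.
move=> cB0.
under eq_bigr do rewrite TA_complete.
rewrite exchange_big /=.
rewrite (eq_bigr (fun _ => \sum_(A : {set 'I_n} | #|A| == n - k) gg t #|B0 :&: A|)).
  have := card_draws 'I_n r; rewrite card_ord => <-; rewrite -sum_nat_const.
  by apply: eq_bigl => B; rewrite inE.
move=> B /eqP cB.
rewrite (eq_bigr (fun A => gg t #|B :&: A|)); last by move=> A _; rewrite setIC.
by apply: phi_card; rewrite cB0 cB.
Qed.

Lemma design_size n t r lam (Bs : seq {set 'I_n}) :
  is_design t r lam Bs -> size Bs * 'C(r, t) = lam * 'C(n, t).
Proof.
case=> cBs cnt.
have -> : lam * 'C(n, t) = \sum_(S : {set 'I_n} | #|S| == t) count (fun B : {set 'I_n} => S \subset B) Bs.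
  rewrite (eq_bigr (fun _ => lam)); last by move=> S /eqP /cnt.
  have := card_draws 'I_n t; rewrite card_ord => <-; rewrite mulnC -sum_nat_const.
  by apply: eq_bigl => S; rewrite inE.
under eq_bigr do rewrite -sum1_count big_mkcond.
rewrite exchange_big /=.
rewrite (eq_big_seq (fun _ => 'C(r, t))).
  by rewrite big_const_seq count_predT iter_addn_0 mulnC.
move=> B BB; rewrite -(cBs B BB) -cards_draws -sum1_card.
rewrite big_mkcond [RHS]big_mkcond /=; apply: eq_bigr => S _.
by rewrite inE andbC; case: (#|S| == t); case: (S \subset B).
Qed.

Lemma max_avg (I : finType) (P : pred I) (F : I -> nat) :
  \sum_(i | P i) F i <= #|P| * \max_(i | P i) F i /\
  (\sum_(i | P i) F i = #|P| * \max_(i | P i) F i <->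
   (forall i j, P i -> P j -> F i = F j)).
Proof.
set m := \max_(i | P i) F i.
have le : forall i, P i -> F i <= m by move=> i Pi; apply: leq_bigmax_cond.
have -> : #|P| * m = \sum_(i | P i) m.
  by rewrite -sum_nat_const; apply: eq_bigl => i.
split; first by apply: leq_sum.
split.
- move=> E.
  have Z : \sum_(i | P i) (m - F i) = 0 by rewrite sumnB // E subnn.
  have eqm : forall i, P i -> F i = m.
    move=> i Pi; move/eqP: Z; rewrite sum_nat_eq0 => /forallP/(_ i); rewrite Pi /= subn_eq0 => H.
    by apply/eqP; rewrite eqn_leq le.
  by move=> i j Pi Pj; rewrite !eqm.
- move=> C.
  case: (boolP [exists i, P i]) => [/existsP[i0 Pi0]|].
    have [j Pj ->] : {j | j \in P & m = F j}.
      by apply: eq_bigmax_cond; apply/card_gt0P; exists i0.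
    by apply: eq_bigr => i Pi; apply: C.
  move=> /existsPn nP; rewrite !big_pred0 // => i; exact: negbTE (nP i).
Qed.

Lemma main_nat n k t r lam (Bs : seq {set 'I_n}) :
  t <= r -> r <= n -> 0 < lam -> is_design t r lam Bs ->
  Tmax k t (complete_design n r) * lam <= Tmax k t Bs * 'C(n - t, r - t) /\
  (Tmax k t (complete_design n r) * lam = Tmax k t Bs * 'C(n - t, r - t) <->
   (forall A A' : {set 'I_n}, #|A| = (n - k)%N -> #|A'| = (n - k)%N ->
      TA t Bs A = TA t Bs A')).
Proof.
move=> tr rn lam0 des.
have [B0 cB0] : exists B0 : {set 'I_n}, #|B0| = r.
  have : 0 < #|[set B : {set 'I_n} | #|B| == r]| by rewrite card_draws card_ord bin_gt0.
  by case/card_gt0P => B; rewrite inE => /eqP; exists B.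
set P := fun A : {set 'I_n} => #|A| == n - k.
set a := #|P|.
have a0 : 0 < a.
  have : 0 < #|[set B : {set 'I_n} | #|B| == n - k]| by rewrite card_draws card_ord bin_gt0 leq_subr.
  by case/card_gt0P => B; rewrite inE => PB; apply/card_gt0P; exists B.
set h := \sum_(A : {set 'I_n} | #|A| == n - k) gg t #|B0 :&: A|.
have S1 := sum_TA k t cB0 (proj1 des) : _ = size Bs * h.
have S2 := sum_TA_complete k t cB0 : _ = 'C(n, r) * h.
have [le1 eq1] := max_avg P (TA t Bs).
have [le2 eq2] := max_avg P (TA t (complete_design n r)).
have const2 : forall A A', P A -> P A' ->
    TA t (complete_design n r) A = TA t (complete_design n r) A'.
  move=> A A' /eqP cA /eqP cA'; rewrite !TA_complete; apply: phi_card; by rewrite cA cA'.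
have E2 : a * Tmax k t (complete_design n r) = 'C(n, r) * h.
  by rewrite -S2; symmetry; apply/eq2.
have ds := design_size des.
have bi := binid tr rn.
have Crt0 : 0 < 'C(r, t) by rewrite bin_gt0.
have key : size Bs * 'C(n - t, r - t) = lam * 'C(n, r).
  apply/eqP; rewrite -(eqn_pmul2r Crt0); apply/eqP.
  by rewrite mulnAC ds -mulnA -bi mulnA.
have L0 : 0 < 'C(n - t, r - t) by rewrite bin_gt0 leq_sub2r.
have core : a * (Tmax k t (complete_design n r) * lam) = size Bs * h * 'C(n - t, r - t).
  by rewrite mulnA E2 mulnAC [_ * lam]mulnC -key; ring.
split.
  rewrite -(leq_pmul2l a0) core mulnA leq_pmul2r // -S1; exact: le1.
split.
- move=> E; move=> A A' cA cA'; apply: (proj1 eq1); last by apply/eqP. 2: by apply/eqP.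
  apply/eqP; rewrite -(eqn_pmul2r L0) S1 -core E mulnA; exact: eqxx.
- move=> C.
  apply/eqP; rewrite -(eqn_pmul2l a0) core mulnA; apply/eqP; congr (_ * _).
  rewrite -S1; apply/eq1 => A A' /eqP cA /eqP cA'; exact: C.
Qed.

Local Open Scope ring_scope.

Lemma Mbar_form n k d t r lam (Bs : seq {set 'I_n}) :
  (0 < lam)%N -> (0 < d)%N -> (t <= r)%N -> (r <= n)%N -> (0 < t)%N ->
  code_Mbar k d t r lam Bs =
  d%:R * 'C(n, t)%:R * 'C(r.-1, t.-1)%:R / ('C(r, t)%:R * 'C(n.-1, t.-1)%:R)
  - d%:R * 'C(r.-1, t.-1)%:R / ((r - t + 1)%:R * 'C(n.-1, t.-1)%:R)
    * ((Tmax k t Bs)%:R / lam%:R).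
Proof.
move=> l0 d0 tr rn t0.
have nz : forall m : nat, (0 < m)%N -> (m%:R : rat) != 0 by move=> m m0; rewrite pnatr_eq0 -lt0n.
have h1 := nz _ l0; have h2 := nz _ d0.
have h3 : ('C(r, t)%:R : rat) != 0 by apply: nz; rewrite bin_gt0.
have h4 : ('C(n.-1, t.-1)%:R : rat) != 0.
  by apply: nz; rewrite bin_gt0 -!subn1 leq_sub2r // (leq_trans tr rn).
have h5 : ('C(r.-1, t.-1)%:R : rat) != 0 by apply: nz; rewrite bin_gt0 -!subn1 leq_sub2r.
have h6 : ((r - t + 1)%:R : rat) != 0 by apply: nz; rewrite addn1.
rewrite /code_Mbar /code_M /code_beta /code_gamma /code_alpha /code_N !natrM.
field. all: rewrite ?h1 ?h2 ?h3 ?h4 ?h5 ?h6 ?andbT //.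
by move: h6; rewrite natrD.
Qed.

Unset Implicit Arguments.
Theorem mainTheorem5 (n k d r lam : nat) (Bs : seq {set 'I_n}) :
  (1 <= k)%N -> (k <= d)%N -> (d < n)%N ->
  ((n - d).+1 <= r)%N -> (r <= n)%N -> (0 < lam)%N ->
  is_design (n - d).+1 r lam Bs ->
  let t := (n - d).+1 in
  let M1 := code_Mbar k d t r lam Bs in
  let M2 := code_Mbar k d t r 'C(n - t, r - t) (complete_design n r) in
  M1 <= M2 /\
  (M1 = M2 <->
   (forall A A' : {set 'I_n}, #|A| = (n - k)%N -> #|A'| = (n - k)%N ->
      TA t Bs A = TA t Bs A')).
Proof.
move=> k1 kd dn tr rn l0 des t M1 M2.
have d0 : (0 < d)%N by apply: leq_trans kd.
have L0 : (0 < 'C(n - t, r - t))%N by rewrite bin_gt0 leq_sub2r.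
have [le eq] := main_nat k tr rn l0 des.
rewrite /M1 /M2 !Mbar_form //.
set X := _ / _.
set Y := _ / _.
have Y0 : 0 < Y.
  rewrite /Y divr_gt0 // ?mulr_gt0 // ?ltr0n ?muln_gt0 ?bin_gt0 //.
  1-3: rewrite /t /= -?subn1; lia.
have Ln : ('C(n - t, r - t)%:R : rat) != 0 by rewrite pnatr_eq0 -lt0n.
have ln : (lam%:R : rat) != 0 by rewrite pnatr_eq0 -lt0n.
have EQ : ((Tmax k t Bs)%:R / lam%:R == (Tmax k t (complete_design n r))%:R / 'C(n - t, r - t)%:R :> rat)
   = (Tmax k t (complete_design n r) * lam == Tmax k t Bs * 'C(n - t, r - t))%N.
  by rewrite eq_sym eqr_div // -!natrM eqr_nat.
split.
  rewrite lerD2l lerN2 ler_pM2l // ler_pdivrMr ?ltr0n // mulrAC ler_pdivlMr ?ltr0n //.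
  by rewrite -!natrM ler_nat.
split.
- move=> /subrI /(mulfI (lt0r_neq0 Y0)) /eqP; rewrite EQ => /eqP; exact: (proj1 eq).
- move=> /(proj2 eq) /eqP; rewrite -EQ => /eqP ->; by [].
Qed.
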